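(* Let $k\ge 1$, let $z_1,\dots,z_k\in\mathbb{C}$ be pairwise distinct with $|z_j|\le 1$ and $z_j\neq 1$ for $j=1,\dots,k$, and let $n,n_1,\dots,n_k\ge 1$ be integers with $n\ge 2$ and $\sum_{j=1}^k n_j\ge kn$. Let $$p(z)=(z-1)^n\prod_{j=1}^{k}(z-z_j)^{n_j},\quad z\in\mathbb{C}.$$ Then there exists $\zeta\neq 1$ such that $p'(\zeta)=0$ and $|\zeta-1/2|\le 1/2$. *)

(* Defs.v *)
From HB Require Import structures.
From mathcomp Require Import all_boot all_order all_algebra.
From mathcomp Require Import reals.
From mathcomp.real_closed Require Export complex.
Set Implicit Arguments. Unset Strict Implicit. Unset Printing Implicit Defensive.
Import Order.TTheory GRing.Theory Num.Theory.
Local Open Scope ring_scope.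
Local Open Scope complex_scope.

Definition pcor (R : rcfType) (k n : nat) (z : 'I_k -> R[i]) (nn : 'I_k -> nat)
  : {poly R[i]} :=
  ('X - 1) ^+ n * \prod_(j < k) ('X - (z j)%:P) ^+ (nn j).

(* Main.v *)
Require Import Defs.
From HB Require Import structures.
From mathcomp Require Import all_boot all_order all_algebra.
From mathcomp Require Import reals.
From mathcomp.real_closed Require Import complex.
From mathcomp Require Import ring lra.
Import Order.TTheory GRing.Theory Num.Theory.
Local Open Scope ring_scope.

Lemma ld_prod (F : fieldType) (s : seq F) : all (fun a => a != 1) s ->
  (\prod_(a <- s) ('X - a%:P))^`().[1] =
  (\prod_(a <- s) (1 - a)) * \sum_(a <- s) (1 - a)^-1.
Proof.
elim: s => [|a t IH] /=; first by rewrite !big_nil derivC hornerC mul1r.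
case/andP=> ha ht; rewrite !big_cons derivM derivXsubC mul1r hornerD hornerM.
rewrite hornerXsubC IH // horner_prod.
have h1 : 1 - a != 0 by rewrite subr_eq0 eq_sym.
rewrite (eq_bigr (fun i => 1 - i)); last by move=> i _; rewrite hornerXsubC.
by field.
Qed.

Lemma Hlemma (F : fieldType) (k : nat) (z : 'I_k -> F) (nn : 'I_k -> nat) (s : seq 'I_k) :
  (forall j, (1 <= nn j)%N) -> (forall j, z j != 1) ->
  exists H : {poly F},
   (\prod_(j <- s) ('X - (z j)%:P) ^+ nn j)^`() =
     (\prod_(j <- s) ('X - (z j)%:P) ^+ (nn j).-1) * H /\
   (size H <= size s)%N /\
   H.[1] = (\prod_(j <- s) (1 - z j)) * \sum_(j <- s) (nn j)%:R / (1 - z j).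
Proof.
move=> hnn hz; elim: s => [|a t [H [eH [sH vH]]]].
  by exists 0; rewrite !big_nil derivC mulr0 size_poly0 horner0 mulr0.
have FAG : \prod_(j <- t) ('X - (z j)%:P) ^+ nn j =
   (\prod_(j <- t) ('X - (z j)%:P) ^+ (nn j).-1) * \prod_(j <- t) ('X - (z j)%:P).
  rewrite -big_split /=; apply: eq_bigr => j _.
  by rewrite -exprSr prednK // hnn.
exists ((nn a)%:R *: \prod_(j <- t) ('X - (z j)%:P) + ('X - (z a)%:P) * H).
split; last split.
- rewrite !big_cons derivM deriv_exp derivXsubC mul1r eH FAG.
  have := hnn a; case: (nn a) => [//|m] _ /=.
  rewrite exprS -mul_polyC rmorph_nat -mulr_natr; ring.
- apply: (leq_trans (size_polyD _ _)); rewrite geq_max; apply/andP; split.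
    by apply: (leq_trans (size_scale_leq _ _)); rewrite size_prod_XsubC.
  apply: (leq_trans (size_polyMleq _ _)); rewrite size_XsubC /=; exact: sH.
- rewrite hornerD hornerZ hornerM hornerXsubC vH horner_prod !big_cons.
  rewrite (eq_bigr (fun i => 1 - z i)); last by move=> i _; rewrite hornerXsubC.
  have h1 : 1 - z a != 0 by rewrite subr_eq0 eq_sym.
  by field.
Qed.

Lemma gen (F : closedFieldType) (k n : nat) (z : 'I_k -> F) (nn : 'I_k -> nat)
  (hn : (1 <= n)%N) (hnF : (n%:R : F) != 0)
  (hnn : forall j, (1 <= nn j)%N) (hz : forall j, z j != 1) :
  exists rs : seq F, (size rs <= k)%N /\
   (forall e, e \in rs -> e != 1 /\
      root ((('X - 1) ^+ n * \prod_(j < k) ('X - (z j)%:P) ^+ (nn j))^`()) e) /\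
   \sum_(e <- rs) (1 - e)^-1 =
     \sum_(j < k) (1 - z j)^-1 + (n%:R)^-1 * \sum_(j < k) (nn j)%:R / (1 - z j).
Proof.
case: n hn hnF => [//|m] _ hnF.
have [H [eH [sH vH]]] := @Hlemma F k z nn (index_enum 'I_k) hnn hz.
have sk : size (index_enum 'I_k) = k by rewrite /index_enum -enumT size_enum_ord.
rewrite sk in sH.
set G := \prod_(j < k) ('X - (z j)%:P).
set A := \prod_(j < k) ('X - (z j)%:P) ^+ (nn j).-1.
have FAG : \prod_(j < k) ('X - (z j)%:P) ^+ nn j = A * G.
  rewrite -big_split /=; apply: eq_bigr => j _.
  by rewrite -exprSr prednK // hnn.
set r := m.+1%:R *: G + ('X - 1) * H.
have ep : (('X - 1) ^+ m.+1 * \prod_(j < k) ('X - (z j)%:P) ^+ (nn j))^`() =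
    ('X - 1) ^+ m * A * r.
  rewrite derivM deriv_exp derivXsubC mul1r eH FAG /r.
  rewrite /=.
  rewrite exprS -mul_polyC rmorph_nat -mulr_natr; rewrite -/A; ring.
have Pz : \prod_(j < k) (1 - z j) != 0.
  by apply/prodf_neq0 => j _; rewrite subr_eq0 eq_sym.
have G1 : G.[1] = \prod_(j < k) (1 - z j).
  rewrite /G horner_prod; apply: eq_bigr => j _; exact: hornerXsubC.
have r1 : r.[1] = m.+1%:R * \prod_(j < k) (1 - z j).
  by rewrite /r hornerD hornerZ hornerM hornerXsubC subrr mul0r addr0 G1.
have r1n : r.[1] != 0 by rewrite r1 mulf_neq0.
have rn0 : r != 0 by apply: contraNneq r1n => ->; rewrite horner0.
have [rs er] := closed_field_poly_normal r.
have c0 : lead_coef r != 0 by rewrite lead_coef_eq0.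
have rootr : forall e, e \in rs -> root r e.
  by move=> e he; rewrite er rootZ // root_prod_XsubC.
have ne1 : forall e, e \in rs -> e != 1.
  by move=> e /rootr; apply: contraTneq => ->.
exists rs; split; last split.
- have : size r = (size rs).+1 by rewrite er size_scale // size_prod_XsubC.
  suff : (size r <= k.+1)%N by move=> h1 h2; rewrite h2 ltnS in h1.
  apply: (leq_trans (size_polyD _ _)); rewrite geq_max; apply/andP; split.
    by apply: (leq_trans (size_scale_leq _ _)); rewrite /G size_prod_XsubC sk.
  apply: (leq_trans (size_polyMleq _ _)); rewrite size_XsubC /=; exact: sH.
- move=> e he; split; first exact: ne1.
  by rewrite ep rootM (rootr _ he) orbT.
- have allrs : all (fun a => a != 1) rs by apply/allP => e /ne1.
  have allz : all (fun a => a != 1) [seq z j | j <- index_enum 'I_k].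
    by apply/allP => x /mapP [j _ ->].
  have dG : G^`().[1] = \prod_(j < k) (1 - z j) * \sum_(j < k) (1 - z j)^-1.
    by rewrite /G -(big_map z xpredT (fun a => 'X - a%:P)) ld_prod // !big_map.
  have dr1 : r^`().[1] = lead_coef r * (\prod_(e <- rs) (1 - e) * \sum_(e <- rs) (1 - e)^-1).
    by rewrite {1}er derivZ hornerZ ld_prod.
  have r1' : r.[1] = lead_coef r * \prod_(e <- rs) (1 - e).
    rewrite {1}er hornerZ horner_prod; congr (_ * _).
    by apply: eq_bigr => e _; rewrite hornerXsubC.
  have dr2 : r^`().[1] = m.+1%:R * G^`().[1] + H.[1].
    rewrite /r derivD derivZ derivM derivXsubC mul1r hornerD hornerZ hornerD hornerM.
    by rewrite hornerXsubC subrr mul0r addr0.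
  have Pe : \prod_(e <- rs) (1 - e) != 0.
    by rewrite prodf_seq_neq0; apply/allP => e /ne1 he /=; rewrite subr_eq0 eq_sym.
  move: dr1; rewrite dr2 dG vH => dr1.
  move: r1'; rewrite r1 => r1'.
  set Se := \sum_(e <- rs) (1 - e)^-1 in dr1 *.
  set Pe' := \prod_(e <- rs) (1 - e) in r1' dr1 Pe *.
  have cP : lead_coef r * Pe' != 0 by rewrite mulf_neq0.
  apply: (mulfI cP); rewrite -mulrA -dr1 -r1'.
  set P := \prod_(j < k) (1 - z j).
  set S1 := \sum_(j < k) (1 - z j)^-1.
  set S2 := \sum_(j < k) (nn j)%:R / (1 - z j).
  rewrite mulrDr mulrA; congr (_ + _).
  by rewrite -mulrA [P * _]mulrC !mulrA [_ * P / _]mulrAC mulfV // mul1r mulrC.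
Qed.

Local Open Scope complex_scope.
Section C.
Variable R : realType.

Lemma Re_inv (a b : R) : complex.Re ((a +i* b)^-1) = a / (a ^+ 2 + b ^+ 2).
Proof. by []. Qed.

Lemma ReD (x y : R[i]) : complex.Re (x + y) = complex.Re x + complex.Re y.
Proof. by case: x; case: y. Qed.

Lemma ReM_real (c : R) (x : R[i]) : complex.Re (c%:C * x) = c * complex.Re x.
Proof. by case: x => a b /=; rewrite mul0r subr0. Qed.

Lemma Re_sum (I : Type) (s : seq I) (f : I -> R[i]) :
  complex.Re (\sum_(i <- s) f i) = \sum_(i <- s) complex.Re (f i).
Proof. exact: (big_morph _ ReD). Qed.

Lemma natC (m : nat) : (m%:R : R[i]) = (m%:R : R)%:C.
Proof. by rewrite rmorph_nat. Qed.

Lemma sqrt_le (x c : R) : 0 <= c -> Num.sqrt x <= c -> x <= c ^+ 2.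
Proof.
move=> hc hs; have [hx|hx] := lerP 0 x; last by apply: le_trans (ltW hx) _; rewrite sqr_ge0.
by rewrite -(sqr_sqrtr hx) ler_pXn2r // ?nnegrE ?sqrtr_ge0.
Qed.

Lemma pos_den (a b : R) : (a +i* b) != 1 -> 0 < (1 - a) ^+ 2 + (- b) ^+ 2.
Proof.
move=> hne.
rewrite lt_def addr_ge0 ?sqr_ge0 // andbT paddr_eq0 ?sqr_ge0 // !sqrf_eq0.
apply: contra hne => /andP [/eqP h1 /eqP h2].
have ha : a = 1 by apply/eqP; rewrite -subr_eq0 -oppr_eq0 opprB h1.
have hb : b = 0 by apply/eqP; rewrite -oppr_eq0 h2.
by rewrite ha hb.
Qed.

Lemma key1 (w : R[i]) : `|w| <= 1 -> w != 1 -> 2^-1 <= complex.Re ((1 - w)^-1).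
Proof.
case: w => a b hn hne.
have e1 : (1 - (a +i* b)) = (1 - a) +i* (- b).
  by apply/eqP; rewrite eq_complex /= ?add0r ?eqxx.
rewrite e1 Re_inv.
move: hn; rewrite normc_def /= -[1 : R[i]]/((1:R)%:C) lecR => /sqrt_le.
rewrite expr1n => /(_ ler01) hab.
have hpos := @pos_den a b hne.
rewrite ler_pdivlMr //; nra.
Qed.

Lemma key2 (e : R[i]) : e != 1 -> 1 <= complex.Re ((1 - e)^-1) -> `|e - 2^-1| <= 2^-1.
Proof.
case: e => a b hne.
have e1 : (1 - (a +i* b)) = (1 - a) +i* (- b).
  by apply/eqP; rewrite eq_complex /= ?add0r ?eqxx.
rewrite e1 Re_inv.
have hpos := @pos_den a b hne.
rewrite ler_pdivlMr // mul1r => h.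
have e2 : (2^-1 : R[i]) = (2^-1 : R)%:C by rewrite fmorphV rmorph_nat.
rewrite e2 normc_def /= lecR.
have hs : Num.sqrt ((2^-1 : R) ^+ 2) = 2^-1.
  by rewrite sqrtr_sqr ger0_norm // invr_ge0 ler0n.
apply: le_trans (ler_wsqrtr (_ : _ <= (2^-1 : R) ^+ 2)) _; last by rewrite hs.
rewrite subr0; nra.
Qed.

End C.


Lemma sum_le1 (R : realType) (s : seq R[i]) (f : R[i] -> R) :
  (forall e, e \in s -> f e < 1) -> \sum_(e <- s) f e <= (size s)%:R.
Proof.
elim: s => [|a t IH] h; first by rewrite big_nil.
rewrite big_cons /= -add1n natrD lerD //.
  by apply: ltW; apply: h; rewrite inE eqxx.
by apply: IH => e he; apply: h; rewrite inE he orbT.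
Qed.

Lemma sum_lt1 (R : realType) (s : seq R[i]) (f : R[i] -> R) :
  (forall e, e \in s -> f e < 1) -> \sum_(e <- s) f e < (size s)%:R + (s == [::])%:R.
Proof.
case: s => [|a t] h; first by rewrite big_nil /= add0r ltr01.
rewrite big_cons /= addr0 -add1n natrD ltr_leD //.
  by apply: h; rewrite inE eqxx.
by apply: sum_le1 => e he; apply: h; rewrite inE he orbT.
Qed.

Theorem corollary1 (R : realType) (k n : nat) (z : 'I_k -> R[i]) (nn : 'I_k -> nat)
  (hk : (1 <= k)%N) (hinj : injective z)
  (hz1 : forall j, `|z j| <= 1) (hzne : forall j, z j != 1)
  (hn : (2 <= n)%N) (hnn : forall j, (1 <= nn j)%N)
  (hsum : (k * n <= \sum_(j < k) nn j)%N) :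
  exists zeta : R[i], zeta != 1 /\ root (@pcor R k n z nn)^`() zeta
                      /\ `|zeta - 2^-1| <= 2^-1.
Proof.
have hn1 : (1 <= n)%N by apply: ltnW.
have hnF : (n%:R : R[i]) != 0 by rewrite pnatr_eq0 -lt0n.
have [rs [hs [hr hS]]] := @gen R[i] k n z nn hn1 hnF hnn hzne.
pose f := fun e : R[i] => complex.Re ((1 - e)^-1).
have [/hasP [e he h]|hno] := boolP (has (fun e => 1 <= f e) rs).
  have [e1 er] := hr e he.
  by exists e; split => //; split => //; apply: key2.
exfalso.
have hlt : forall e, e \in rs -> f e < 1.
  by move=> e he; rewrite ltNge; apply: contra hno => h; apply/hasP; exists e.
have U := @sum_lt1 R rs f hlt.
have U' : \sum_(e <- rs) f e < k%:R.
  apply: (lt_le_trans U); case: rs hs {hr hS U hno hlt} => [|a t] /= hs.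
    by rewrite add0r ler1n.
  by rewrite addr0 ler_nat.
move: U'; apply/negP; rewrite -leNgt.
have -> : \sum_(e <- rs) f e = complex.Re (\sum_(e <- rs) (1 - e)^-1) by rewrite Re_sum.
rewrite hS ReD Re_sum natC -fmorphV ReM_real Re_sum.
pose W := fun j => complex.Re ((1 - z j)^-1).
have hW : forall j, 2^-1 <= W j by move=> j; apply: key1.
have E2 : \sum_(i < k) complex.Re ((nn i)%:R / (1 - z i)) = \sum_(i < k) (nn i)%:R * W i.
  by apply: eq_bigr => j _; rewrite natC ReM_real.
rewrite E2.
have L1 : k%:R * 2^-1 <= \sum_(i < k) W i.
  have -> : k%:R * 2^-1 = \sum_(i < k) (2^-1 : R).
    by rewrite sumr_const card_ord mulr_natl.
  by apply: ler_sum => j _; apply: hW.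
have L2 : (\sum_(i < k) nn i)%:R * 2^-1 <= \sum_(i < k) (nn i)%:R * W i.
  rewrite natr_sum mulr_suml; apply: ler_sum => j _.
  by apply: ler_wpM2l; [apply: ler0n | apply: hW].
have L3 : (k * n)%:R * 2^-1 <= (\sum_(i < k) nn i)%:R * (2^-1 : R).
  by apply: ler_wpM2r; [rewrite invr_ge0 ler0n | rewrite ler_nat].
have hN : 0 < (n%:R : R) by rewrite ltr0n.
have L4 : (n%:R : R)^-1 * ((k * n)%:R * 2^-1) = k%:R * 2^-1.
  rewrite natrM; field; by rewrite gt_eqF.
have L5 : (n%:R : R)^-1 * ((k * n)%:R * 2^-1) <= (n%:R : R)^-1 * \sum_(i < k) (nn i)%:R * W i.
  apply: ler_wpM2l; first by rewrite invr_ge0 ltW.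
  exact: le_trans L3 L2.
rewrite L4 in L5.
lra.
Qed.
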